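(* Let $n\ge1$, put $L=2^n$ and $M=2^{n-1}$, and let $g={}_5h_n$. Define the words \begin{align*} {}_6h_{n+1}&=\delta_f(g)\,u\,\overline{\delta_m(g)}\,r\,g\,d\,\overline{\delta_y(g)},\\ {}_7h_{n+1}&=\delta_f(g)\,u\,\overline{\delta_m(g)}\,r\,g\,d\,\delta_a(g),\\ {}_8h_{n+1}&=\overline{\delta_g(g)}\,u\,\overline{\delta_m(g)}\,r\,g\,d\,\delta_a(g),\\ {}_9h_{n+1}&=\overline{\delta_o(g)}\,u\,\delta_g(g)\,r\,\overline{\delta_a(g)}\,d\,\delta_x(g),\\ {}_{10}h_{n+1}&=\delta_m(g)\,u\,\delta_g(g)\,r\,\overline{\delta_a(g)}\,d\,\overline{g},\\ {}_{11}h_{n+1}&=\delta_m(g)\,u\,\delta_g(g)\,r\,\overline{\delta_a(g)}\,d\,\delta_x(g). \end{align*} Then each of these words traces a Hamiltonian path of the grid $\{0,\dots,2L-1\}^2$, with the following endpoints: \begin{enumerate} \item ${}_6h_{n+1}$ goes from $(L-1,M)$ to $(L,M)$; the endpoints are adjacent. \item ${}_7h_{n+1}$ goes from $(L-1,M)$ to $(2L-1,M-1)$. \item ${}_8h_{n+1}$ goes from $(0,M-1)$ to $(2L-1,M-1)$. \item ${}_9h_{n+1}$ goes from $(L-1,M-1)$ to $(L,M-1)$; the endpoints are adjacent. \item ${}_{10}h_{n+1}$ goes from $(0,M)$ to $(2L-1,M)$. \item ${}_{11}h_{n+1}$ goes from $(0,M)$ to $(L,M-1)$. \end{enumerate}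
   Context: Let $\Sigma=\{u,d,r,l\}$, where $u$ = up, $d$ = down, $r$ = right and $l$ = left. Set $v(u)=(0,1)$, $v(d)=(0,-1)$, $v(r)=(1,0)$ and $v(l)=(-1,0)$. For a finite word $w=w_1\cdots w_k$ over $\Sigma$ and a point $p\in\mathbb{Z}^2$, the lattice path encoded by $w$ from $p$ is the sequence $p_0=p$, $p_i=p_{i-1}+v(w_i)$ for $i=1,\dots,k$. For $m\ge 1$, say that $w$ traces a Hamiltonian path of the grid $\{0,\dots,m-1\}^2$ from $a$ to $b$ if the path encoded by $w$ from $a$ satisfies three conditions: the points $p_0,\dots,p_k$ are pairwise distinct; $\{p_0,\dots,p_k\}=\{0,\dots,m-1\}^2$, so that $k=m^2-1$; and $p_k=b$. Grid points represent the $m^2$ equal subsquares of the unit square, and consecutive points are edge-adjacent squares. Juxtaposition denotes concatenation of words. The reversion operation is $\overline{w_1w_2\cdots w_k}=w_k\cdots w_2w_1$: the order of the letters is reversed and no letter is substituted. The following letter-to-letter morphisms of $\Sigma^*$ are applied letterwise: \begin{itemize} \item $\delta_o$: $u\mapsto r$, $r\mapsto u$, $d\mapsto l$, $l\mapsto d$; \item $\delta_a$: $u\mapsto l$, $r\mapsto d$, $d\mapsto r$, $l\mapsto u$; \item $\delta_g$: $u\mapsto l$, $r\mapsto u$, $d\mapsto r$, $l\mapsto d$; \item $\delta_x$: $u\mapsto r$, $r\mapsto d$, $d\mapsto l$, $l\mapsto u$; \item $\delta_f$: $u\mapsto d$, $r\mapsto l$, $d\mapsto u$, $l\mapsto r$;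 \item $\delta_m$: $u\mapsto d$, $r\mapsto r$, $d\mapsto u$, $l\mapsto l$; \item $\delta_y$: $u\mapsto u$, $r\mapsto l$, $d\mapsto d$, $l\mapsto r$. \end{itemize} The Hilbert words are defined recursively by ${}_0h_0=\varepsilon$ (the empty word) and \[ {}_0h_{n+1}=\delta_o({}_0h_n)\,u\,{}_0h_n\,r\,{}_0h_n\,d\,\delta_a({}_0h_n). \] For $n\ge1$, put $h={}_0h_{n-1}$ and define \[ {}_5h_n=\delta_m(h)\,u\,\delta_g(h)\,r\,\delta_x(h)\,d\,\delta_x(h). \] *)

(* Defs.v *)
From Stdlib Require Import ZArith List.
Import ListNotations.
Open Scope Z_scope.

Inductive letter : Type := u | d | r | l.

Definition word := list letter.
Definition point := (Z * Z)%type.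

Definition v (c : letter) : point :=
  match c with
  | u => (0, 1) | d => (0, -1) | r => (1, 0) | l => (-1, 0)
  end.

Definition padd (p q : point) : point := (fst p + fst q, snd p + snd q).

Fixpoint lpath (p : point) (w : word) : list point :=
  match w with
  | [] => [p]
  | c :: w' => p :: lpath (padd p (v c)) w'
  end.

Definition in_grid (m : Z) (q : point) : Prop :=
  0 <= fst q <= m - 1 /\ 0 <= snd q <= m - 1.

Definition traces_ham (m : Z) (a b : point) (w : word) : Prop :=
  NoDup (lpath a w) /\
  (forall q, In q (lpath a w) <-> in_grid m q) /\
  last (lpath a w) a = b.

Definition adjacent (p q : point) : Prop :=
  Z.abs (fst p - fst q) + Z.abs (snd p - snd q) = 1.

(* reversion: order of letters reversed, no substitution *)
Definition rev_w (w : word) : word := rev w.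

Definition morph (f : letter -> letter) (w : word) : word := map f w.

Definition delta_o := morph (fun c => match c with u => r | r => u | d => l | l => d end).
Definition delta_a := morph (fun c => match c with u => l | r => d | d => r | l => u end).
Definition delta_g := morph (fun c => match c with u => l | r => u | d => r | l => d end).
Definition delta_x := morph (fun c => match c with u => r | r => d | d => l | l => u end).
Definition delta_f := morph (fun c => match c with u => d | r => l | d => u | l => r end).
Definition delta_m := morph (fun c => match c with u => d | r => r | d => u | l => l end).
Definition delta_y := morph (fun c => match c with u => u | r => l | d => d | l => r end).

Fixpoint h0 (n : nat) : word :=
  match n with
  | O => []
  | S k => let h := h0 k in
           delta_o h ++ [u] ++ h ++ [r] ++ h ++ [d] ++ delta_a h
  end.

(* 5h_n (meaningful for n >= 1), with h = 0h_{n-1} *)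
Definition h5 (n : nat) : word :=
  let h := h0 (n - 1) in
  delta_m h ++ [u] ++ delta_g h ++ [r] ++ delta_x h ++ [d] ++ delta_x h.

Definition h6 (n : nat) : word := let g := h5 n in
  delta_f g ++ [u] ++ rev_w (delta_m g) ++ [r] ++ g ++ [d] ++ rev_w (delta_y g).
Definition h7 (n : nat) : word := let g := h5 n in
  delta_f g ++ [u] ++ rev_w (delta_m g) ++ [r] ++ g ++ [d] ++ delta_a g.
Definition h8 (n : nat) : word := let g := h5 n in
  rev_w (delta_g g) ++ [u] ++ rev_w (delta_m g) ++ [r] ++ g ++ [d] ++ delta_a g.
Definition h9 (n : nat) : word := let g := h5 n in
  rev_w (delta_o g) ++ [u] ++ delta_g g ++ [r] ++ rev_w (delta_a g) ++ [d] ++ delta_x g.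
Definition h10 (n : nat) : word := let g := h5 n in
  delta_m g ++ [u] ++ delta_g g ++ [r] ++ rev_w (delta_a g) ++ [d] ++ rev_w g.
Definition h11 (n : nat) : word := let g := h5 n in
  delta_m g ++ [u] ++ delta_g g ++ [r] ++ rev_w (delta_a g) ++ [d] ++ delta_x g.

(* Main.v *)
Require Import Defs.
From Stdlib Require Import ZArith List Lia FinFun.
Import ListNotations.
Open Scope Z_scope.

Fixpoint endp (p : point) (w : word) : point :=
  match w with [] => p | c :: w' => endp (padd p (v c)) w' end.

Definition ham (S : point -> Prop) (a b : point) (w : word) : Prop :=
  NoDup (lpath a w) /\ (forall q, In q (lpath a w) <-> S q) /\ endp a w = b.

Definition neg (c : letter) : letter :=
  match c with u => d | d => u | r => l | l => r end.

Definition psub (c q : point) : point := (fst c - fst q, snd c - snd q).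

Lemma last_lpath w : forall p x, last (lpath p w) x = endp p w.
Proof.
  induction w as [|c w IH]; intros p x; [reflexivity|].
  cbn [lpath endp]. rewrite <- (IH _ x). destruct w; reflexivity.
Qed.

Lemma lpath_app w1 : forall p c w2,
  lpath p (w1 ++ c :: w2) = lpath p w1 ++ lpath (padd (endp p w1) (v c)) w2.
Proof. induction w1 as [|c' w IH]; intros; simpl; [reflexivity|]. now rewrite IH. Qed.

Lemma endp_app w1 : forall p w2, endp p (w1 ++ w2) = endp (endp p w1) w2.
Proof. induction w1; intros; simpl; auto. Qed.

Lemma padd_neg p c : padd (padd p (v c)) (v (neg c)) = p.
Proof. destruct p as [x y]; destruct c; unfold padd; simpl; f_equal; lia. Qed.

Lemma endp_revneg w : forall p, endp (endp p w) (map neg (rev w)) = p.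
Proof.
  induction w as [|c w IH]; intros p; [reflexivity|].
  simpl. rewrite map_app, endp_app, IH. simpl. apply padd_neg.
Qed.

Lemma lpath_revneg w : forall p, lpath (endp p w) (map neg (rev w)) = rev (lpath p w).
Proof.
  induction w as [|c w IH]; intros p; [reflexivity|].
  simpl. rewrite map_app. simpl. rewrite lpath_app, IH, endp_revneg, padd_neg. reflexivity.
Qed.

Lemma ham_revneg S a b w : ham S a b w -> ham S b a (map neg (rev w)).
Proof.
  intros [H1 [H2 H3]]. subst b. split; [|split].
  - rewrite lpath_revneg. now apply NoDup_rev.
  - intros q. rewrite lpath_revneg, <- in_rev. apply H2.
  - apply endp_revneg.
Qed.

Lemma lpath_map f T w : (forall q c, T (padd q (v c)) = padd (T q) (v (f c))) ->
  forall p, lpath (T p) (map f w) = map T (lpath p w).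
Proof. intros HT; induction w; intros p; simpl; [reflexivity|]. now rewrite <- HT, IHw. Qed.

Lemma endp_map f T w : (forall q c, T (padd q (v c)) = padd (T q) (v (f c))) ->
  forall p, endp (T p) (map f w) = T (endp p w).
Proof. intros HT; induction w; intros p; simpl; [reflexivity|]. now rewrite <- HT, IHw. Qed.

Lemma ham_morph (f : letter -> letter) (T Ti : point -> point) S a b w :
  (forall q, Ti (T q) = q) -> (forall q, T (Ti q) = q) ->
  (forall q c, T (padd q (v c)) = padd (T q) (v (f c))) ->
  ham S a b w -> ham (fun q => S (Ti q)) (T a) (T b) (map f w).
Proof.
  intros K1 K2 HT [H1 [H2 H3]]. split; [|split].
  - rewrite (lpath_map f T w HT). apply Injective_map_NoDup; auto.
    intros x y E. rewrite <- (K1 x), <- (K1 y), E. reflexivity.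
  - intros q. rewrite (lpath_map f T w HT), in_map_iff, <- H2. split.
    + intros [x [<- Hx]]. now rewrite K1.
    + intros Hq. exists (Ti q). auto.
  - rewrite (endp_map f T w HT). now f_equal.
Qed.

Lemma ham_rev c S a b w : ham S a b w ->
  ham (fun q => S (psub c q)) (psub c b) (psub c a) (rev w).
Proof.
  intros H. apply ham_revneg in H.
  apply (ham_morph neg (psub c) (psub c)) in H.
  - rewrite map_map in H. erewrite map_ext in H; [rewrite map_id in H; exact H|].
    intros []; reflexivity.
  - intros [x y]; unfold psub; simpl; f_equal; lia.
  - intros [x y]; unfold psub; simpl; f_equal; lia.
  - intros [x y] []; unfold psub, padd; simpl; f_equal; lia.
Qed.

Lemma ham_ext S S' a b w : (forall q, S q <-> S' q) -> ham S a b w -> ham S' a b w.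
Proof. intros E [H1 [H2 H3]]; split; [|split]; auto. intros q; rewrite H2; apply E. Qed.

Lemma ham_app S1 S2 a b1 b c w1 w2 : ham S1 a b1 w1 -> ham S2 (padd b1 (v c)) b w2 ->
  (forall q, S1 q -> S2 q -> False) ->
  ham (fun q => S1 q \/ S2 q) a b (w1 ++ c :: w2).
Proof.
  intros [H1 [H2 H3]] [G1 [G2 G3]] D. subst b1. split; [|split].
  - rewrite lpath_app. apply NoDup_app; auto.
    intros q Hq Hq'. apply (D q); [apply H2|apply G2]; auto.
  - intros q. rewrite lpath_app, in_app_iff, H2, G2. tauto.
  - rewrite endp_app. exact G3.
Qed.

Lemma ham4 S S1 S2 S3 S4 a b a1 b1 a2 b2 a3 b3 a4 b4 c1 c2 c3 w1 w2 w3 w4 :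
  ham S1 a1 b1 w1 -> ham S2 a2 b2 w2 -> ham S3 a3 b3 w3 -> ham S4 a4 b4 w4 ->
  a1 = a -> a2 = padd b1 (v c1) -> a3 = padd b2 (v c2) -> a4 = padd b3 (v c3) -> b4 = b ->
  (forall q, S1 q -> S2 q -> False) -> (forall q, S1 q -> S3 q -> False) ->
  (forall q, S1 q -> S4 q -> False) -> (forall q, S2 q -> S3 q -> False) ->
  (forall q, S2 q -> S4 q -> False) -> (forall q, S3 q -> S4 q -> False) ->
  (forall q, S q <-> S1 q \/ S2 q \/ S3 q \/ S4 q) ->
  ham S a b (w1 ++ [c1] ++ w2 ++ [c2] ++ w3 ++ [c3] ++ w4).
Proof.
  intros P1 P2 P3 P4 E1 E2 E3 E4 E5 D12 D13 D14 D23 D24 D34 C.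
  subst. eapply ham_ext; [intros q; symmetry; apply C|]. simpl.
  apply (ham_app _ _ _ b1); auto.
  - apply (ham_app _ _ _ b2); auto.
    apply (ham_app _ _ _ b3); auto.
    intros q H [H'|H']; eauto.
  - intros q H [H'|[H'|H']]; eauto.
Qed.

Definition box (x0 y0 sx sy : Z) (q : point) : Prop :=
  x0 <= fst q < x0 + sx /\ y0 <= snd q < y0 + sy.

Lemma traces_of_ham m a b w : ham (box 0 0 m m) a b w -> traces_ham m a b w.
Proof.
  intros [H1 [H2 H3]]. split; [|split]; auto.
  - intros q; rewrite H2; unfold box, in_grid; destruct q; simpl; lia.
  - now rewrite last_lpath.
Qed.
Lemma ham_trans t S a b w : ham S a b w ->
  ham (fun q => S (fst q - fst t, snd q - snd t)) (padd a t) (padd b t) w.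
Proof.
  intros H. apply (ham_morph (fun c => c) (fun q => padd q t)
    (fun q => (fst q - fst t, snd q - snd t))) in H.
  - rewrite map_id in H. exact H.
  - intros [x y]; unfold padd; simpl; f_equal; lia.
  - intros [x y]; unfold padd; simpl; f_equal; lia.
  - intros [x y] c; unfold padd; simpl; f_equal; lia.
Qed.

Ltac mside := first [ intros [x y]; simpl; f_equal; lia
                    | intros [x y] []; unfold padd; simpl; f_equal; lia ].
Ltac fin := first [ reflexivity | unfold padd, psub; cbn [fst snd v]; f_equal; lia
                  | intros [x y]; unfold box, psub; cbv beta; cbn [fst snd]; lia ].
Ltac mo T Ti H := apply (ham_morph _ T Ti); [mside|mside|mside|exact H].

Lemma h0_step s h : s > 0 -> ham (box 0 0 s s) (0,0) (s-1,0) h ->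
  ham (box 0 0 (2*s) (2*s)) (0,0) (2*s-1,0)
   (delta_o h ++ [u] ++ h ++ [r] ++ h ++ [d] ++ delta_a h).
Proof.
  intros Hs IH. unfold delta_o, delta_a, morph.
  eapply ham4;
  [ mo (fun q : point => (snd q, fst q)) (fun q : point => (snd q, fst q)) IH
  | apply (ham_trans (0, s)); exact IH
  | apply (ham_trans (s, s)); exact IH
  | mo (fun q : point => (2*s-1-snd q, s-1-fst q)) (fun q : point => (s-1-snd q, 2*s-1-fst q)) IH
  | .. ]; fin.
Qed.


Lemma h0_ham k : ham (box 0 0 (2^Z.of_nat k) (2^Z.of_nat k)) (0,0) (2^Z.of_nat k - 1, 0) (h0 k).
Proof.
  induction k as [|k IH].
  - simpl. split; [|split].
    + constructor; [intros []|constructor].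
    + intros [x y]; unfold box; simpl; split.
      * intros [E|[]]; inversion E; lia.
      * intros H; left; f_equal; lia.
    + reflexivity.
  - rewrite Nat2Z.inj_succ, Z.pow_succ_r by lia.
    rewrite (Z.mul_comm 2). 
    assert (2 ^ Z.of_nat k > 0) by (apply Z.lt_gt, Z.pow_pos_nonneg; lia).
    rewrite (Z.mul_comm _ 2). apply h0_step; auto.
Qed.

Lemma h5_step s h : s > 0 -> ham (box 0 0 s s) (0,0) (s-1,0) h ->
  ham (box 0 0 (2*s) (2*s)) (0,s-1) (s,0)
   (delta_m h ++ [u] ++ delta_g h ++ [r] ++ delta_x h ++ [d] ++ delta_x h).
Proof.
  intros Hs IH. unfold delta_m, delta_g, delta_x, morph.
  eapply ham4;
  [ mo (fun q : point => (fst q, s-1-snd q)) (fun q : point => (fst q, s-1-snd q)) IH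
  | mo (fun q : point => (s-1-snd q, s+fst q)) (fun q : point => (snd q-s, s-1-fst q)) IH
  | mo (fun q : point => (s+snd q, 2*s-1-fst q)) (fun q : point => (2*s-1-snd q, fst q-s)) IH
  | mo (fun q : point => (s+snd q, s-1-fst q)) (fun q : point => (s-1-snd q, fst q-s)) IH
  | .. ]; fin.
Qed.

Section Top.
Variable M : Z.
Variable g : word.
Hypothesis HM : M > 0.
Hypothesis Hg : ham (box 0 0 (2*M) (2*M)) (0,M-1) (M,0) g.

Lemma h6_l : ham (box 0 0 (2*(2*M)) (2*(2*M))) (2*M-1, M) (2*M, M)
  (delta_f g ++ [u] ++ rev_w (delta_m g) ++ [r] ++ g ++ [d] ++ rev_w (delta_y g)).
Proof.
  unfold delta_f, delta_m, delta_y, rev_w, morph.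
  eapply ham4;
  [ mo (fun q : point => (2*M-1-fst q, 2*M-1-snd q)) (fun q : point => (2*M-1-fst q, 2*M-1-snd q)) Hg
  | apply (ham_rev (2*M-1, 2*M)); mo (fun q : point => (fst q, - snd q)) (fun q : point => (fst q, - snd q)) Hg
  | apply (ham_trans (2*M, 2*M)); exact Hg
  | apply (ham_rev (2*M, 2*M-1)); mo (fun q : point => (- fst q, snd q)) (fun q : point => (- fst q, snd q)) Hg
  | .. ]; fin.
Qed.

Lemma h7_l : ham (box 0 0 (2*(2*M)) (2*(2*M))) (2*M-1, M) (2*(2*M)-1, M-1)
  (delta_f g ++ [u] ++ rev_w (delta_m g) ++ [r] ++ g ++ [d] ++ delta_a g).
Proof.
  unfold delta_f, delta_m, delta_a, rev_w, morph.
  eapply ham4;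
  [ mo (fun q : point => (2*M-1-fst q, 2*M-1-snd q)) (fun q : point => (2*M-1-fst q, 2*M-1-snd q)) Hg
  | apply (ham_rev (2*M-1, 2*M)); mo (fun q : point => (fst q, - snd q)) (fun q : point => (fst q, - snd q)) Hg
  | apply (ham_trans (2*M, 2*M)); exact Hg
  | mo (fun q : point => (4*M-1-snd q, 2*M-1-fst q)) (fun q : point => (2*M-1-snd q, 4*M-1-fst q)) Hg
  | .. ]; fin.
Qed.

Lemma h8_l : ham (box 0 0 (2*(2*M)) (2*(2*M))) (0, M-1) (2*(2*M)-1, M-1)
  (rev_w (delta_g g) ++ [u] ++ rev_w (delta_m g) ++ [r] ++ g ++ [d] ++ delta_a g).
Proof.
  unfold delta_g, delta_m, delta_a, rev_w, morph.
  eapply ham4;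
  [ apply (ham_rev (0, 2*M-1)); mo (fun q : point => (- snd q, fst q)) (fun q : point => (snd q, - fst q)) Hg
  | apply (ham_rev (2*M-1, 2*M)); mo (fun q : point => (fst q, - snd q)) (fun q : point => (fst q, - snd q)) Hg
  | apply (ham_trans (2*M, 2*M)); exact Hg
  | mo (fun q : point => (4*M-1-snd q, 2*M-1-fst q)) (fun q : point => (2*M-1-snd q, 4*M-1-fst q)) Hg
  | .. ]; fin.
Qed.

Lemma h9_l : ham (box 0 0 (2*(2*M)) (2*(2*M))) (2*M-1, M-1) (2*M, M-1)
  (rev_w (delta_o g) ++ [u] ++ delta_g g ++ [r] ++ rev_w (delta_a g) ++ [d] ++ delta_x g).
Proof.
  unfold delta_o, delta_g, delta_a, delta_x, rev_w, morph.
  eapply ham4;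
  [ apply (ham_rev (2*M-1, 2*M-1)); mo (fun q : point => (snd q, fst q)) (fun q : point => (snd q, fst q)) Hg
  | mo (fun q : point => (2*M-1-snd q, 2*M+fst q)) (fun q : point => (snd q-2*M, 2*M-1-fst q)) Hg
  | apply (ham_rev (2*M, 2*M)); mo (fun q : point => (- snd q, - fst q)) (fun q : point => (- snd q, - fst q)) Hg
  | mo (fun q : point => (2*M+snd q, 2*M-1-fst q)) (fun q : point => (2*M-1-snd q, fst q-2*M)) Hg
  | .. ]; fin.
Qed.

Lemma h10_l : ham (box 0 0 (2*(2*M)) (2*(2*M))) (0, M) (2*(2*M)-1, M)
  (delta_m g ++ [u] ++ delta_g g ++ [r] ++ rev_w (delta_a g) ++ [d] ++ rev_w g).
Proof.
  unfold delta_m, delta_g, delta_a, rev_w, morph.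
  eapply ham4;
  [ mo (fun q : point => (fst q, 2*M-1-snd q)) (fun q : point => (fst q, 2*M-1-snd q)) Hg
  | mo (fun q : point => (2*M-1-snd q, 2*M+fst q)) (fun q : point => (snd q-2*M, 2*M-1-fst q)) Hg
  | apply (ham_rev (2*M, 2*M)); mo (fun q : point => (- snd q, - fst q)) (fun q : point => (- snd q, - fst q)) Hg
  | apply (ham_rev (4*M-1, 2*M-1)); exact Hg
  | .. ]; fin.
Qed.

Lemma h11_l : ham (box 0 0 (2*(2*M)) (2*(2*M))) (0, M) (2*M, M-1)
  (delta_m g ++ [u] ++ delta_g g ++ [r] ++ rev_w (delta_a g) ++ [d] ++ delta_x g).
Proof.
  unfold delta_m, delta_g, delta_a, delta_x, rev_w, morph.
  eapply ham4;
  [ mo (fun q : point => (fst q, 2*M-1-snd q)) (fun q : point => (fst q, 2*M-1-snd q)) Hg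
  | mo (fun q : point => (2*M-1-snd q, 2*M+fst q)) (fun q : point => (snd q-2*M, 2*M-1-fst q)) Hg
  | apply (ham_rev (2*M, 2*M)); mo (fun q : point => (- snd q, - fst q)) (fun q : point => (- snd q, - fst q)) Hg
  | mo (fun q : point => (2*M+snd q, 2*M-1-fst q)) (fun q : point => (2*M-1-snd q, fst q-2*M)) Hg
  | .. ]; fin.
Qed.
End Top.

Theorem mainTheorem2 (n : nat) (Hn : (1 <= n)%nat) :
  let L := 2 ^ Z.of_nat n in
  let M := 2 ^ (Z.of_nat n - 1) in
  (traces_ham (2 * L) (L - 1, M) (L, M) (h6 n) /\ adjacent (L - 1, M) (L, M)) /\
  traces_ham (2 * L) (L - 1, M) (2 * L - 1, M - 1) (h7 n) /\
  traces_ham (2 * L) (0, M - 1) (2 * L - 1, M - 1) (h8 n) /\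
  (traces_ham (2 * L) (L - 1, M - 1) (L, M - 1) (h9 n) /\ adjacent (L - 1, M - 1) (L, M - 1)) /\
  traces_ham (2 * L) (0, M) (2 * L - 1, M) (h10 n) /\
  traces_ham (2 * L) (0, M) (L, M - 1) (h11 n).
Proof.
  destruct n as [|k]; [lia|]. cbv zeta.
  assert (EM: 2^(Z.of_nat (S k) - 1) = 2^Z.of_nat k) by (f_equal; lia).
  assert (EL: 2^Z.of_nat (S k) = 2 * 2^Z.of_nat k)
    by (rewrite Nat2Z.inj_succ, Z.pow_succ_r; lia).
  rewrite EM, EL.
  assert (HM : 2^Z.of_nat k > 0) by (apply Z.lt_gt, Z.pow_pos_nonneg; lia).
  assert (Hg : ham (box 0 0 (2*2^Z.of_nat k) (2*2^Z.of_nat k)) (0,2^Z.of_nat k-1) (2^Z.of_nat k,0) (h5 (S k))).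
  { unfold h5. replace (S k - 1)%nat with k by lia. apply h5_step; [lia|apply h0_ham]. }
  set (M := 2^Z.of_nat k) in *. clearbody M.
  assert (A1 : forall p q, Z.abs (fst p - fst q) + Z.abs (snd p - snd q) = 1 -> adjacent p q) by auto.
  split; [split|split; [|split; [|split; [split|split]]]];
    try (apply A1; simpl; lia); apply traces_of_ham.
  - apply h6_l; auto.
  - apply h7_l; auto.
  - apply h8_l; auto.
  - apply h9_l; auto.
  - apply h10_l; auto.
  - apply h11_l; auto.
Qed.
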